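(* Consider MINTIME under the independent cascade model with budget $k$ and coverage threshold $\eta$, and let $R_{\mathit{OPT}}$ be the optimal propagation time. Let $\epsilon>0$, use coverage threshold $\eta-\epsilon$ and budget threshold $k(1+\ln(\eta/\epsilon))$. If the coverage function $\sigma^R(\cdot)$ can be computed exactly, then there is a greedy algorithm (greedy seed selection for coverage within $R$ steps, combined with a linear search over $R=0,\dots,n-1$) that approximates MINTIME within an $(\alpha,\beta,\gamma)$ factor with $\alpha=1$, $\beta=1+\ln(\eta/\epsilon)$ and $\gamma=1-\epsilon/\eta$, i.e., it outputs $S$ and $R$ with $|S|\le\beta k$, $R\le\alpha R_{\mathit{OPT}}$ and $\sigma^R(S)\ge\gamma\eta$. Furthermore, for every $\phi>0$ there is a $\delta>0$ such that, using $(1-\delta)$-approximate values of $\sigma^R(\cdot)$, the greedy algorithm approximates MINTIME within an $(\alpha,\beta,\gamma)$ factor with $\alpha=1$, $\beta=(1+\phi)(1+\ln(\eta/\epsilon))$ and $\gamma=1-\epsilon/\eta$.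
   Context: Independent cascade (IC) model on a directed graph $G=(V,E)$, $n=|V|$, with arc probabilities $p_{v,u}$: seed nodes are active at time $0$; when a node $v$ becomes active at time $t$, it has one chance to activate each inactive out-neighbour $u$, succeeding independently with probability $p_{v,u}$, in which case $u$ becomes active at time $t+1$. $\sigma^R(S)$ denotes the expected number of nodes active by time $R$ with seed set $S$. MINTIME: given $G$, an integer $k$ and a real $\eta\le|V|$, find $S\subseteq V$ with $|S|\le k$ and the smallest $t\in\mathbb{N}$ with $\sigma^t(S)\ge\eta$; $R_{\mathit{OPT}}$ is this smallest $t$. The greedy step for fixed $R$: start with $S=\emptyset$ and, while $\sigma^R(S)<\eta-\epsilon$, add a node $w\notin S$ maximizing $\min(\sigma^R(S\cup\{w\}),\eta)-\sigma^R(S)$. Using $(1-\delta)$-approximate values means replacing $\sigma^R$ by an estimate $\sigma'$ with $(1-\delta)\sigma^R(S)\le\sigma'(S)\le\sigma^R(S)$ for all $S$. *)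

(* Defs.v *)
From HB Require Import structures.
From mathcomp Require Import all_boot all_order all_algebra.
From mathcomp Require Import reals exp.
Set Implicit Arguments. Unset Strict Implicit. Unset Printing Implicit Defensive.
Import Order.TTheory GRing.Theory Num.Theory.
Local Open Scope ring_scope.

Section IC.
Variables (R : realType) (V : finType).
Variables (E : rel V) (p : V -> V -> R).

(* Outcome of all coin flips: x (v,u) = true iff the (unique) activation
   attempt of v on u succeeds. Each node becomes newly active at most once,
   hence each arc is attempted at most once, so one coin per arc suffices. *)
Definition coins := {ffun V * V -> bool}.

Definition coin_prob (x : coins) : R :=
  \prod_(e : V * V)
     (if E e.1 e.2 then (if x e then p e.1 e.2 else 1 - p e.1 e.2)
      else (if x e then 0 else 1)).

(* One time step: state = (active set, nodes newly active at current time). *)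
Definition ic_step (x : coins) (st : {set V} * {set V}) : {set V} * {set V} :=
  let A := st.1 in let N := st.2 in
  let New := [set u | (u \notin A) && [exists v in N, E v u && x (v, u)]] in
  (A :|: New, New).

Definition active_by (x : coins) (S : {set V}) (t : nat) : {set V} :=
  (iter t (ic_step x) (S, S)).1.

Definition sigma (t : nat) (S : {set V}) : R :=
  \sum_(x : coins) coin_prob x * (#|active_by x S t|)%:R.

Definition is_Ropt (k : nat) (eta : R) (t : nat) : Prop :=
  (exists S : {set V}, (#|S| <= k)%N /\ eta <= sigma t S) /\
  (forall t', (t' < t)%N -> forall S : {set V}, (#|S| <= k)%N -> sigma t' S < eta).
End IC.

Section Greedy.
Variables (R : realType) (V : finType).

Definition gain (f : {set V} -> R) (eta : R) (S : {set V}) (w : V) : R :=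
  Num.min (f (w |: S)) eta - f S.

Definition valid_choice (f : {set V} -> R) (eta : R) (ch : {set V} -> V) : Prop :=
  forall S : {set V}, S != setT ->
    ch S \notin S /\ forall w, w \notin S -> gain f eta S w <= gain f eta S (ch S).

(* Greedy: from the empty set, while f S < thr (and a node outside S exists),
   add the chosen maximizer; at most |V| additions can occur. *)
Definition greedy (f : {set V} -> R) (thr : R) (ch : {set V} -> V) : {set V} :=
  iter #|V| (fun S => if (f S < thr) && (S != setT) then ch S |: S else S) set0.

Definition mintime_greedy (f : nat -> {set V} -> R) (eta eps budget : R)
    (ch : nat -> {set V} -> V) : option ({set V} * nat) :=
  let acc t := let S := greedy (f t) (eta - eps) (ch t) in
               (eta - eps <= f t S) && ((#|S|)%:R <= budget) in
  let t := find acc (iota 0 #|V|) in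
  if (t < #|V|)%N then Some (greedy (f t) (eta - eps) (ch t), t) else None.
End Greedy.

(* Main.v *)
Require Import Defs.
From HB Require Import structures.
From mathcomp Require Import all_boot all_order all_algebra.
From mathcomp Require Import reals exp sequences.
From mathcomp Require Import ring lra.
Set Implicit Arguments. Unset Strict Implicit. Unset Printing Implicit Defensive.
Import Order.TTheory GRing.Theory Num.Theory.
Local Open Scope ring_scope.

Section ICfacts.
Variables (R : realType) (V : finType) (E : rel V) (p : V -> V -> R).

Definition Fx (x : coins V) (X : {set V}) : {set V} :=
  X :|: [set u | [exists v in X, E v u && x (v, u)]].

Definition reach (x : coins V) (S : {set V}) (t : nat) := iter t (Fx x) S.

Lemma active_reach x S t : active_by E x S t = reach x S t.
Proof.
rewrite /active_by /reach.
suff : let st := iter t (ic_step E x) (S, S) in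
  [/\ st.1 = iter t (Fx x) S, st.2 \subset st.1 &
      forall v u, v \in st.1 -> v \notin st.2 -> E v u -> x (v, u) -> u \in st.1].
  by case.
elim: t => [|t [IH1 IH2 IH3]] /=.
  by split => // v u ->.
set st := iter t (ic_step E x) (S, S) in IH1 IH2 IH3 *.
rewrite -IH1 /ic_step /=.
split.
- apply/setP => u; rewrite /Fx !inE.
  case uA: (u \in st.1) => //=.
  apply/fintype.existsP/fintype.existsP => -[v /andP[vN /andP[Evu xvu]]].
    by exists v; rewrite (subsetP IH2 _ vN) Evu xvu.
  exists v; rewrite Evu xvu !andbT.
  by apply/negPn/negP => vN'; rewrite (IH3 v u vN vN' Evu xvu) in uA.
- apply/subsetP => u; rewrite !inE => ->; by rewrite orbT.
- move=> v u vA' vnew Evu xvu.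
  have vA : v \in st.1 by move: vA'; rewrite in_setU (negbTE vnew) orbF.
  rewrite in_setU; case vN: (v \in st.2); last by rewrite (IH3 v u vA) ?vN.
  case uA: (u \in st.1) => //=.
  by rewrite inE uA /=; apply/fintype.existsP; exists v; rewrite vN Evu xvu.
Qed.

Lemma Fx_union x (A B : {set V}) : Fx x (A :|: B) = Fx x A :|: Fx x B.
Proof.
apply/setP => u; rewrite /Fx !in_setU !in_set.
case: (u \in A); case: (u \in B) => //=; rewrite ?orbT //=.
apply/fintype.existsP/orP.
  move=> [v /andP[]]; rewrite inE => /orP[vA|vB] H; [left|right];
  by apply/fintype.existsP; exists v; rewrite ?vA ?vB.
have K : forall X : {set V}, X \subset A :|: B ->
   [exists v in X, E v u && x (v, u)] -> [exists v in A :|: B, E v u && x (v, u)].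
  move=> X XS /fintype.existsP [v /andP [vX H]]; apply/fintype.existsP; exists v.
  by rewrite (subsetP XS _ vX).
by case=> H; apply/fintype.existsP; [apply: (K A) | apply: (K B)]; rewrite ?subsetUl ?subsetUr.
Qed.

Lemma reach_union x (A B : {set V}) t : reach x (A :|: B) t = reach x A t :|: reach x B t.
Proof. by elim: t => //= t IH; rewrite IH Fx_union. Qed.

Lemma reach_mono x (A B : {set V}) t : A \subset B -> reach x A t \subset reach x B t.
Proof. by move=> /setUidPr <-; rewrite reach_union subsetUl. Qed.

Lemma reach0 x t : reach x set0 t = set0.
Proof.
elim: t => //= t IH; rewrite IH /Fx; apply/setP => u; rewrite !inE /=.
by apply/negbTE/fintype.existsP => -[v]; rewrite inE.
Qed.

Lemma Fx_incl x (X : {set V}) : X \subset Fx x X.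
Proof. exact: subsetUl. Qed.

Lemma reach_stab x (S : {set V}) m : reach x S (#|V|.-1 + m) = reach x S #|V|.-1.
Proof.
have fixp : forall j, reach x S j.+1 = reach x S j ->
   forall m, reach x S (j + m) = reach x S j.
  move=> j hj; elim=> [|m1 IH]; first by rewrite addn0.
  by rewrite addnS /reach /= -/(reach x S (j + m1)) IH.
case: (set_0Vmem S) => [->|[s sS]]; first by rewrite !reach0.
have claim : forall t, (exists2 j, (j <= t)%N & reach x S j.+1 = reach x S j)
   \/ (t + 1 <= #|reach x S t|)%N.
  elim=> [|t [[j jt hj]|IH]].
  - by right; rewrite /reach /= add0n card_gt0; apply/set0Pn; exists s.
  - by left; exists j => //; apply: leqW.
  - case E1 : (reach x S t.+1 == reach x S t); first by left; exists t => //; apply/eqP.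
    right; have sub : reach x S t \proper reach x S t.+1.
      by rewrite properEneq eq_sym E1 /=; exact: Fx_incl.
    by have := proper_card sub; rewrite addSn; apply: leq_trans; rewrite ltnS.
case: (claim #|V|.-1) => [[j jt hj]|H].
  by rewrite -(subnKC jt) -addnA !fixp.
apply: fixp.
have full : reach x S #|V|.-1 = setT.
  apply/eqP; rewrite eqEcard subsetT cardsT; apply: leq_trans H.
  by case: #|V| => // n; rewrite addn1.
by rewrite /reach /= -/(reach x S #|V|.-1) full; apply/eqP; rewrite eqEsubset subsetT Fx_incl.
Qed.
End ICfacts.

Section SigmaFacts.
Variables (R : realType) (V : finType) (E : rel V) (p : V -> V -> R).
Hypothesis hp : forall v u, E v u -> 0 <= p v u <= 1.

Lemma coin_prob_ge0 x : 0 <= coin_prob E p x.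
Proof.
apply: prodr_ge0 => e _.
case: (E e.1 e.2) (hp (v:=e.1) (u:=e.2)) => [/(_ erefl)/andP[h0 h1]|_];
  case: (x e) => //; by rewrite subr_ge0.
Qed.

Lemma sigmaE t S : sigma E p t S = \sum_x coin_prob E p x * (#|reach E x S t|)%:R.
Proof. by apply: eq_bigr => x _; rewrite (active_reach E). Qed.

Lemma sigma_mono t (A B : {set V}) : A \subset B -> sigma E p t A <= sigma E p t B.
Proof.
move=> AB; rewrite !sigmaE; apply: ler_sum => x _; apply: ler_wpM2l.
  exact: coin_prob_ge0.
by rewrite ler_nat; apply: subset_leq_card; apply: reach_mono.
Qed.

Lemma sigma0 t : sigma E p t set0 = 0.
Proof. by rewrite sigmaE big1 // => x _; rewrite reach0 cards0 mulr0. Qed.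

Lemma sigma_stab t S : (#|V|.-1 <= t)%N -> sigma E p t S = sigma E p #|V|.-1 S.
Proof.
move=> h; rewrite !sigmaE; apply: eq_bigr => x _.
by rewrite -(subnKC h) reach_stab.
Qed.

Lemma card_sub x t (S : {set V}) (s : seq V) :
  (#|reach E x (S :|: [set:: s]) t|)%:R - (#|reach E x S t|)%:R <=
  \sum_(w <- s) ((#|reach E x (w |: S) t|)%:R - (#|reach E x S t|)%:R :> R).
Proof.
elim: s => [|w s IH]; first by rewrite big_nil set_nil setU0 subrr.
rewrite big_cons.
have eq1 : S :|: [set:: w :: s] = (S :|: [set:: s]) :|: (w |: S).
  apply/setP => y; rewrite !inE; by case: (y == w); case: (y \in S); case: (y \in s).
rewrite eq1 reach_union.
set Y := reach E x (S :|: [set:: s]) t; set Z := reach E x (w |: S) t; set W := reach E x S t.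
have hW : W \subset Y :&: Z.
  by rewrite subsetI !reach_mono ?subsetUl // subsetUr.
have h1 : (#|Y :|: Z| + #|W| <= #|Y| + #|Z|)%N.
  rewrite -(cardsUI Y Z); by rewrite leq_add2l subset_leq_card.
have h2 : (#|Y :|: Z|)%:R + (#|W|)%:R <= (#|Y|)%:R + (#|Z|)%:R :> R.
  by rewrite -!natrD ler_nat.
have := IH; rewrite -/Y -/W => IH'.
lra.
Qed.

Lemma sigma_sub t (S T : {set V}) :
  sigma E p t (S :|: T) - sigma E p t S <=
  \sum_(w in T) (sigma E p t (w |: S) - sigma E p t S).
Proof.
rewrite -big_enum /=.
under eq_bigr => w _ do rewrite !sigmaE -sumrB.
rewrite exchange_big /= !sigmaE -sumrB.
apply: ler_sum => x _.
under eq_bigr => w _ do rewrite -mulrBr.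
rewrite -mulr_sumr -mulrBr; apply: ler_wpM2l; first exact: coin_prob_ge0.
by have := card_sub x t S (enum T); rewrite set_enum.
Qed.

Lemma sigma_ge0 t S : 0 <= sigma E p t S.
Proof. by rewrite -(sigma0 t); apply: sigma_mono; exact: sub0set. Qed.
End SigmaFacts.



Lemma min_cases (R : realType) (x y : R) :
  (Num.min x y = x /\ x <= y) \/ (Num.min x y = y /\ y <= x).
Proof.
case: (lerP x y) => h.
  by left; split => //; apply/min_idPl.
by right; split; [unfold Num.min | exact: ltW].
Qed.

Section GreedyAnalysis.
Variables (R : realType) (V : finType) (sg f : {set V} -> R) (eta eps c : R).
Variables (k : nat) (Ss : {set V}) (ch : {set V} -> V).
Hypothesis hmono : forall A B : {set V}, A \subset B -> sg A <= sg B.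
Hypothesis hsub : forall S : {set V},
  sg (S :|: Ss) - sg S <= \sum_(w in Ss) (sg (w |: S) - sg S).
Hypothesis hk0 : (0 < k)%N.
Hypothesis hk : (#|Ss| <= k)%N.
Hypothesis hSs : eta <= sg Ss.
Hypothesis happ : forall S, sg S - c <= f S /\ f S <= sg S.
Hypothesis hc : 0 <= c.
Hypothesis hkc : k%:R * c < eps.
Hypothesis hch : valid_choice f eta ch.

Let kr : R := k%:R.
Let iK : R := kr^-1.
Lemma kr_ge1 : 1 <= kr. Proof. by rewrite /kr ler1n. Qed.
Lemma kr_iK : kr * iK = 1. Proof. rewrite /iK mulfV //; have := kr_ge1; apply: contraTneq => ->; by rewrite ler10. Qed.
Lemma iK_gt0 : 0 < iK. Proof. by rewrite /iK invr_gt0; have := kr_ge1; lra. Qed.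
Lemma iK_le1 : iK <= 1. Proof. by rewrite /iK invf_le1 ?kr_ge1 //; have := kr_ge1; lra. Qed.

Lemma greedy_step S : f S < eta - eps -> S != setT ->
  eta - f (ch S |: S) <= (1 - iK) * (eta - f S) + c.
Proof.
move=> hS hT.
have c_lt : c < eps.
  have h1 : 0 <= (kr - 1) * c by apply: mulr_ge0 => //; have := kr_ge1; lra.
  have := hkc; rewrite -/kr; nra.
have [hsgS hfS] := happ S.
have hkc' : kr * c < eps by [].
set D' := eta - f S.
have eD' : D' = eta - f S by [].
have hD' : eps < D' by rewrite eD'; lra.
have sgS_lt : sg S < eta.
  by rewrite ltNge; apply/negP => h; lra.
set D := eta - sg S.
have eD : D = eta - sg S by [].
have hiK := iK_gt0; have hiK1 := iK_le1; have hkr := kr_ge1; have hkiK := kr_iK.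
have ex : exists2 w, w \in Ss & D' * iK - c <= Num.min (f (w |: S)) eta - f S.
  case: (boolP [exists w in Ss, D' * iK - c <= Num.min (f (w |: S)) eta - f S]).
    by move/exists_inP => [w wS hw]; exists w.
  rewrite negb_exists_in => /forall_inP H.
  have hg : forall w, w \in Ss -> sg (w |: S) - sg S < D * iK.
    move=> w wS; have := H w wS; rewrite -ltNge => h.
    have [h1 h2] := happ (w |: S).
    have p1 : 0 <= (sg S - f S) * (1 - iK) by apply: mulr_ge0; lra.
    have e1 : D' * iK = D * iK + (sg S - f S) * iK by rewrite /D' /D -mulrDl; congr (_ * _); lra.
    have p2 : D' * iK <= D' by rewrite -{2}(mulr1 D') ler_wpM2l //; lra.
    move: p1; rewrite mulrBr mulr1 => p1.
    case: (min_cases (f (w |: S)) eta) => [[em hm]|[em hm]]; rewrite em in h.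
    + case: (lerP (sg (w |: S)) eta) => hs; lra.
    + case: (lerP (sg (w |: S)) eta) => hs; lra.
  have hsum : D <= \sum_(w in Ss) (sg (w |: S) - sg S).
    apply: le_trans (hsub S); rewrite /D.
    move: (hmono (subsetUr S Ss)) => hh; by rewrite lerD2r (le_trans hSs hh).
  case: (set_0Vmem Ss) => [S0|[w0 w0S]].
    by move: hsum; rewrite S0 big_set0 /D; lra.
  have hlt : \sum_(w in Ss) (sg (w |: S) - sg S) < \sum_(w in Ss) (D * iK).
    apply: ltr_sum; last exact: hg.
    by apply/hasP; exists w0; rewrite ?mem_index_enum.
  rewrite sumr_const -mulr_natl in hlt.
  have hcard : (#|Ss|)%:R * (D * iK) <= kr * (D * iK).
    apply: ler_wpM2r; first by apply: mulr_ge0 => //; rewrite /D; lra.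
    by rewrite ler_nat.
  have : kr * (D * iK) = D by rewrite mulrCA hkiK mulr1.
  lra.
case: ex => w wS hw.
have e2 : kr * (D' * iK) = D' by rewrite mulrCA hkiK mulr1.
case wIn: (w \in S).
  have eS : w |: S = S by apply/setP => y; rewrite !inE; case: eqP => // ->.
  rewrite eS in hw.
  case: (min_cases (f S) eta) => [[em hm]|[em hm]]; rewrite em in hw; last lra.
  have : kr * (D' * iK - c) <= 0 by apply: mulr_ge0_le0; lra.
  rewrite mulrBr e2; lra.
have [chn hmax] := hch hT.
have := hmax w (negbT wIn); rewrite /gain => hg.
case: (min_cases (f (ch S |: S)) eta) => [[em hm]|[em hm]]; rewrite em in hg;
  rewrite mulrBl mul1r (mulrC iK); lra.
Qed.


Hypothesis hf0 : 0 <= f set0.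
Hypothesis hTT : eta - eps <= f setT.
Hypothesis heps : 0 < eps.
Hypothesis heta : 0 <= eta.

Let stp := fun S : {set V} => if (f S < eta - eps) && (S != setT) then ch S |: S else S.

Lemma greedy_inv i : let S := iter i stp set0 in
 (f S < eta - eps /\ #|S| = i /\ eta - f S <= eta * (1 - iK) ^+ i + kr * c) \/
 (eta - eps <= f S /\ (#|S| = 0%N \/
     exists j, #|S| = j.+1 /\ eps < eta * (1 - iK) ^+ j + kr * c)).
Proof.
have hiK := iK_gt0; have hiK1 := iK_le1; have hkr := kr_ge1; have hkiK := kr_iK.
have hkc0 : 0 <= kr * c by apply: mulr_ge0 => //; lra.
have hf0' : 0 <= f set0 := hf0.
have hTT' : eta - eps <= f setT := hTT.
have heps' : 0 < eps := heps.
have heta' : 0 <= eta := heta.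
elim: i => [|i IH] /=.
  case: (ltrP (f set0) (eta - eps)) => h.
    left; split => //; split; first by rewrite cards0.
    rewrite expr0 mulr1; lra.
  by right; split => //; left; rewrite cards0.
set S := iter i stp set0 in IH *.
case: IH => [[h1 [h2 h3]]|[h1 h2]]; last first.
  rewrite /stp; have -> : (f S < eta - eps) = false by apply/negbTE; rewrite -leNgt.
  by right.
have hT : S != setT.
  by apply/negP => /eqP eT; rewrite eT in h1; lra.
rewrite /stp h1 hT /=.
have hs := greedy_step h1 hT.
have [chn _] := hch hT.
have card1 : #|ch S |: S| = i.+1 by rewrite cardsU1 chn h2.
have rec : eta - f (ch S |: S) <= eta * (1 - iK) ^+ i.+1 + kr * c.
  apply: le_trans hs _.
  have q0 : 0 <= 1 - iK by lra.
  have e1 : (1 - iK) * (kr * c) = kr * c - c.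
    by rewrite mulrBl mul1r mulrA (mulrC iK) hkiK mul1r.
  have e2 : (1 - iK) * (eta * (1 - iK) ^+ i) = eta * (1 - iK) ^+ i.+1.
    by rewrite exprS mulrCA.
  have h4 : (1 - iK) * (eta - f S) <= eta * (1 - iK) ^+ i.+1 + (kr * c - c).
    by rewrite -e1 -e2 -mulrDr; apply: ler_wpM2l.
  lra.
case: (ltrP (f (ch S |: S)) (eta - eps)) => h.
  by left.
right; split => //; right; exists i; split => //.
lra.
Qed.

Lemma greedy_final :
  let S := greedy f (eta - eps) ch in
  eta - eps <= f S /\ (#|S| = 0%N \/
     exists j, #|S| = j.+1 /\ eps < eta * (1 - iK) ^+ j + kr * c).
Proof.
have hTT' : eta - eps <= f setT := hTT.
have := greedy_inv #|V|; rewrite /greedy /=.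
case=> [[h1 [h2 _]]|//].
set S := iter _ _ set0 in h1 h2 *.
have eT : S = setT.
 apply/eqP. by rewrite eqEcard subsetT cardsT /= h2.
by move: hTT'; rewrite -eT leNgt h1.
Qed.
End GreedyAnalysis.

Lemma budget (R : realType) (k : nat) (eta eps phi c : R) (j : nat) :
  (0 < k)%N -> 0 < eps -> eps <= eta -> 0 <= phi ->
  k%:R * c <= eps * (1 - expR (- phi)) ->
  eps < eta * (1 - (k%:R)^-1) ^+ j + k%:R * c ->
  (j.+1)%:R <= (1 + phi) * (1 + ln (eta / eps)) * k%:R.
Proof.
move=> hk he hee hphi hc hlt.
set kr : R := k%:R; set iK := kr^-1.
have hkr : 1 <= kr by rewrite /kr ler1n.
have hkiK : kr * iK = 1 by rewrite /iK mulfV //; apply/eqP => h; move: hkr; rewrite h; lra.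
have hiK : 0 < iK by rewrite /iK invr_gt0; lra.
have hiK1 : iK <= 1 by rewrite /iK invf_le1; lra.
have q0 : 0 <= 1 - iK by lra.
have hq : (1 - iK) ^+ j <= expR (j%:R * - iK).
  rewrite expRM_natl; apply: lerXn2r; rewrite ?nnegrE ?expR_ge0 //.
  by have := expR_ge1Dx (- iK).
set L := ln (eta / eps).
have hL : 0 <= L by apply: ln_ge0; rewrite ler_pdivlMr // mul1r.
have eeta : eta = eps * expR L.
  by rewrite /L lnK ?posrE ?divr_gt0 //; try lra; rewrite mulrC divfK //; lra.
have h1 : eps * expR (- phi) < eta * expR (j%:R * - iK).
  have : eta * (1 - iK) ^+ j <= eta * expR (j%:R * - iK) by apply: ler_wpM2l => //; lra.
  lra.
rewrite eeta -mulrA -expRD ltr_pM2l // ltr_expR in h1.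
have h2 : j%:R < kr * (L + phi).
  have : kr * (j%:R * iK) = j%:R by rewrite mulrCA hkiK mulr1.
  have : kr * (j%:R * iK) < kr * (L + phi) by rewrite ltr_pM2l; lra.
  lra.
have h3 : 0 <= kr * (phi * L) by apply: mulr_ge0; [lra | apply: mulr_ge0].
rewrite -addn1 natrD.
have : (1 + phi) * (1 + L) * kr = kr + kr * L + kr * phi + kr * (phi * L) by ring.
nra.
Qed.

Lemma mintime_ok (R : realType) (V : finType) (f : nat -> {set V} -> R)
  (eta eps B : R) (ch : nat -> {set V} -> V) (T0 : nat) :
  (T0 < #|V|)%N ->
  eta - eps <= f T0 (greedy (f T0) (eta - eps) (ch T0)) ->
  (#|greedy (f T0) (eta - eps) (ch T0)|)%:R <= B ->
  exists S t, mintime_greedy f eta eps B ch = Some (S, t) /\ (t <= T0)%N /\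
    eta - eps <= f t S /\ (#|S|)%:R <= B.
Proof.
move=> hT h1 h2.
rewrite /mintime_greedy; cbv zeta.
set acc := (fun t : nat => (eta - eps <= f t (greedy (f t) (eta - eps) (ch t))) &&
   ((#|greedy (f t) (eta - eps) (ch t)|)%:R <= B)).
have accT : acc T0 by rewrite /acc h1 h2.
have hs : has acc (iota 0 #|V|) by apply/hasP; exists T0; rewrite // mem_iota.
have := nth_find 0 hs; rewrite has_find size_iota in hs.
rewrite hs nth_iota // add0n => /andP[a1 a2].
exists (greedy (f (find acc (iota 0 #|V|))) (eta - eps) (ch (find acc (iota 0 #|V|)))).
exists (find acc (iota 0 #|V|)); split => //; split => //.
rewrite leqNgt; apply/negP => lt.
by have := before_find 0 lt; rewrite nth_iota // add0n accT.
Qed.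

Theorem theorem6 (R : realType) (V : finType) (E : rel V) (p : V -> V -> R)
  (k : nat) (eta eps : R) (Ropt : nat) :
  (forall v u, E v u -> 0 <= p v u <= 1) ->
  eta <= (#|V|)%:R ->
  0 < eps -> eps <= eta ->
  is_Ropt E p k eta Ropt ->
  (* exact coverage values *)
  (forall ch : nat -> {set V} -> V,
     (forall t, valid_choice (sigma E p t) eta (ch t)) ->
     let alpha : R := 1 in
     let beta : R := 1 + ln (eta / eps) in
     let gamma : R := 1 - eps / eta in
     exists (S : {set V}) (t : nat),
       mintime_greedy (sigma E p) eta eps (k%:R * (1 + ln (eta / eps))) ch
         = Some (S, t) /\
       t%:R <= alpha * Ropt%:R /\ (#|S|)%:R <= beta * k%:R /\
       gamma * eta <= sigma E p t S) /\
  (* (1 - delta)-approximate coverage values *)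
  (forall phi : R, 0 < phi -> exists delta : R, 0 < delta /\
     forall (sig' : nat -> {set V} -> R),
     (forall t (S : {set V}),
        (1 - delta) * sigma E p t S <= sig' t S /\ sig' t S <= sigma E p t S) ->
     forall ch : nat -> {set V} -> V,
     (forall t, valid_choice (sig' t) eta (ch t)) ->
     let alpha : R := 1 in
     let beta : R := (1 + phi) * (1 + ln (eta / eps)) in
     let gamma : R := 1 - eps / eta in
     exists (S : {set V}) (t : nat),
       mintime_greedy sig' eta eps (beta * k%:R) ch = Some (S, t) /\
       t%:R <= alpha * Ropt%:R /\ (#|S|)%:R <= beta * k%:R /\
       gamma * eta <= sigma E p t S).
Proof.
move=> hp hn heps hee [[Ss [hSk hSs]] hmin].
have heta : 0 < eta by lra.
have hn0 : (0 < #|V|)%N.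
  by rewrite lt0n; apply/eqP => h; move: hn; rewrite h; lra.
have hk0 : (0 < k)%N.
  rewrite lt0n; apply/eqP => k0; move: hSk; rewrite k0 leqn0 cards_eq0 => /eqP S0.
  by move: hSs; rewrite S0 sigma0; lra.
have hR : (Ropt < #|V|)%N.
  rewrite ltnNge; apply/negP => hle.
  have h1 : (#|V|.-1 < Ropt)%N by move: hn0 hle; case: #|V|.
  have := hmin _ h1 Ss hSk.
  rewrite -(@sigma_stab _ _ E p Ropt Ss) ?(leq_trans (leq_pred _) hle) //; lra.
have hM : eta <= sigma E p Ropt setT.
  by apply: le_trans hSs _; apply: sigma_mono => //; exact: subsetT.
have hL : 0 <= ln (eta / eps) by apply: ln_ge0; rewrite ler_pdivlMr // mul1r.
have hgam : (1 - eps / eta) * eta = eta - eps.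
  by rewrite mulrBl mul1r divfK //; lra.
split.
  move=> ch hch alpha beta gamma.
  set sg := sigma E p Ropt.
  have happ : forall S, sg S - 0 <= sg S /\ sg S <= sg S by move=> S; split; lra.
  have hkc : k%:R * 0 < eps by rewrite mulr0.
  have hf0 : 0 <= sg set0 by rewrite /sg sigma0.
  have hTT : eta - eps <= sg setT by rewrite /sg; lra.
  have [a1 a2] := greedy_final (sigma_mono hp Ropt) (fun S => sigma_sub hp Ropt S Ss) hk0 hSk hSs
     happ (lexx 0) hkc (hch Ropt) hf0 hTT heps (ltW heta).
  set B := k%:R * (1 + ln (eta / eps)).
  have hB : (#|greedy sg (eta - eps) (ch Ropt)|)%:R <= B.
    case: a2 => [->|[j [-> hj]]].
      by rewrite /B; apply: mulr_ge0 => //; lra.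
    have hb : (j.+1)%:R <= (1 + 0) * (1 + ln (eta / eps)) * k%:R.
      apply: (budget (phi:=0) hk0 heps hee (lexx 0) _ hj).
      by rewrite oppr0 expR0 subrr !mulr0.
    by move: hb; rewrite addr0 mul1r /B mulrC.
  have [S [t [e1 [e2 [e3 e4]]]]] := mintime_ok (f := sigma E p) hR a1 hB.
  exists S, t; split => //; split; first by rewrite /alpha mul1r ler_nat.
  split; first by rewrite /beta mulrC.
  by rewrite /gamma hgam.
move=> phi hphi.
set M := sigma E p Ropt setT.
have hMpos : 0 < M by rewrite /M; lra.
set r := expR (- phi).
have hr0 : 0 < r := expR_gt0 _.
have hr1 : r < 1 by rewrite /r expR_lt1 oppr_lt0.
set kr : R := k%:R.
have hkr : 1 <= kr by rewrite /kr ler1n.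
set a := eps * (1 - r) / (kr * (M + 1)).
have hkM : 0 < kr * (M + 1) by apply: mulr_gt0; lra.
have ha : 0 < a by apply: divr_gt0 => //; apply: mulr_gt0; lra.
have eka : kr * a * (M + 1) = eps * (1 - r).
  have -> : kr * a * (M + 1) = a * (kr * (M + 1)) by ring.
  by rewrite /a divfK //; apply/eqP => h; move: hkM; rewrite h ltxx.
have hde : 0 < eps / eta by apply: divr_gt0.
exists (Num.min (eps / eta) a).
have [hd1 hd2] : Num.min (eps / eta) a <= eps / eta /\ Num.min (eps / eta) a <= a.
  by case: (min_cases (eps / eta) a) => [[-> h]|[-> h]]; split => //; lra.
have hd0 : 0 < Num.min (eps / eta) a.
  by case: (min_cases (eps / eta) a) => [[-> h]|[-> h]].
set d := Num.min (eps / eta) a in hd1 hd2 hd0 *.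
split => //.
move=> sig' hsig ch hch alpha beta gamma.
set c := d * M.
have hdeta : d * eta <= eps.
  have : d * eta <= eps / eta * eta by apply: ler_wpM2r => //; lra.
  by rewrite divfK //; apply/eqP => h; move: heta; rewrite h ltxx.
have hd1' : d <= 1.
  have : eps / eta <= 1 by rewrite ler_pdivrMr // mul1r.
  lra.
have happ : forall S, sigma E p Ropt S - c <= sig' Ropt S /\ sig' Ropt S <= sigma E p Ropt S.
  move=> S; have [h1 h2] := hsig Ropt S; split => //.
  have hSM : sigma E p Ropt S <= M by apply: sigma_mono => //; exact: subsetT.
  have : d * sigma E p Ropt S <= d * M by apply: ler_wpM2l => //; lra.
  move: h1; rewrite mulrBl mul1r /c; lra.
have hc : 0 <= c by apply: mulr_ge0; lra.
have hkc_le : kr * c <= eps * (1 - r).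
  have h1 : kr * c <= kr * (a * M).
    by apply: ler_wpM2l; [lra | apply: ler_wpM2r => //; lra].
  have h2 : 0 <= kr * a by apply: mulr_ge0; lra.
  have : kr * (a * M) + kr * a = eps * (1 - r) by rewrite -eka; ring.
  lra.
have hkc : k%:R * c < eps.
  have : 0 < eps * r by apply: mulr_gt0.
  rewrite -/kr; move: hkc_le; rewrite mulrBr mulr1; lra.
have hf0 : 0 <= sig' Ropt set0.
  by have [h1 _] := hsig Ropt set0; move: h1; rewrite sigma0 mulr0.
have hTT : eta - eps <= sig' Ropt setT.
  have [h1 _] := hsig Ropt setT.
  have : (1 - d) * eta <= (1 - d) * M by apply: ler_wpM2l => //; lra.
  move: h1; rewrite -/M mulrBl mul1r; lra.
have [a1 a2] := greedy_final (sigma_mono hp Ropt) (fun S => sigma_sub hp Ropt S Ss) hk0 hSk hSs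
   happ hc hkc (hch Ropt) hf0 hTT heps (ltW heta).
set B := beta * k%:R.
have hB : (#|greedy (sig' Ropt) (eta - eps) (ch Ropt)|)%:R <= B.
  case: a2 => [->|[j [-> hj]]].
    rewrite /B /beta; apply: mulr_ge0 => //; apply: mulr_ge0; lra.
  apply: (budget hk0 heps hee (ltW hphi) _ hj).
  exact: hkc_le.
have [S [t [e1 [e2 [e3 e4]]]]] := mintime_ok (f := sig') hR a1 hB.
exists S, t; split => //; split; first by rewrite /alpha mul1r ler_nat.
split => //.
rewrite /gamma hgam; apply: le_trans e3 _; exact: (hsig t S).2.
Qed.
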